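(* Let $T=\begin{pmatrix}1&1\\0&1\end{pmatrix}$. For all integers $n,m$, each of the matrices $$\begin{pmatrix}1&n\\0&1\end{pmatrix},\qquad \begin{pmatrix}-1&n\\0&-1\end{pmatrix},\qquad \begin{pmatrix}n&1-nm\\-1&m\end{pmatrix},\qquad \begin{pmatrix}n&nm-1\\1&m\end{pmatrix}$$ can be written in the form $T^{\varepsilon}[A_1,B_1][A_2,B_2]$ with $\varepsilon\in\{-1,0,1\}$ and $A_1,B_1,A_2,B_2\in\mathsf{GL}(2,\mathbb{Z})$; i.e. each is, up to at most one factor $T^{\pm1}$, a product of at most two commutators in $\mathsf{GL}(2,\mathbb{Z})$.
   Context: $[A,B]=ABA^{-1}B^{-1}$. A product of ''at most two'' commutators includes products where some commutator factors are trivial. *)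

(* Defs.v *)
From mathcomp Require Import all_boot all_order all_algebra.
Set Implicit Arguments. Unset Strict Implicit. Unset Printing Implicit Defensive.
Import GRing.Theory Num.Theory.
Local Open Scope ring_scope.

Definition mx2 (a b c d : int) : 'M[int]_2 :=
  \matrix_(i < 2, j < 2)
    if i == 0 then (if j == 0 then a else b) else (if j == 0 then c else d).

Definition Tm : 'M[int]_2 := mx2 1 1 0 1.

(* GL(2,Z): integer matrices invertible over Z (det = +-1) *)
Definition GL2Z (A : 'M[int]_2) : bool := A \in unitmx.

Definition comm2 (A B : 'M[int]_2) : 'M[int]_2 :=
  A *m B *m invmx A *m invmx B.

Definition Tpow (e : int) : 'M[int]_2 :=
  if e == 1 then Tm else if e == -1 then invmx Tm else 1%:M.

Definition good_form (M : 'M[int]_2) : Prop :=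
  exists (e : int) (A1 B1 A2 B2 : 'M[int]_2),
    (e == -1 \/ e == 0 \/ e == 1) /\
    GL2Z A1 /\ GL2Z B1 /\ GL2Z A2 /\ GL2Z B2 /\
    M = Tpow e *m comm2 A1 B1 *m comm2 A2 B2.

(* Main.v *)
Require Import Defs.
From mathcomp Require Import all_boot all_order all_algebra ring zify.
Import GRing.Theory Num.Theory.
Set Implicit Arguments. Unset Strict Implicit.
Local Open Scope ring_scope.

Lemma mul_mx2 a b c d a' b' c' d' :
  mx2 a b c d *m mx2 a' b' c' d' =
  mx2 (a*a' + b*c') (a*b' + b*d') (c*a' + d*c') (c*b' + d*d').
Proof.
apply/matrixP => i j; rewrite /mx2 !mxE !big_ord_recl big_ord0 /=.
case: i => [[|[|i]] Hi] //; case: j => [[|[|j]] Hj] //=; rewrite !mxE /=; ring.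
Qed.

Lemma one_mx2 : (1%:M : 'M[int]_2) = mx2 1 0 0 1.
Proof.
apply/matrixP => i j; rewrite /mx2 !mxE.
by case: i => [[|[|i]] Hi] //; case: j => [[|[|j]] Hj].
Qed.

Lemma mx2_eq a b c d a' b' c' d' : a = a' -> b = b' -> c = c' -> d = d' ->
  mx2 a b c d = mx2 a' b' c' d'.
Proof. by move=> -> -> -> ->. Qed.

Lemma inv_of (A B : 'M[int]_2) : B *m A = 1%:M -> invmx A = B /\ GL2Z A.
Proof.
move=> BA. have AB := mulmx1C BA. have [uA uB] := mulmx1_unit AB.
split; last by [].
by rewrite -[invmx A]mul1mx -BA -mulmxA mulmxV // mulmx1.
Qed.

Lemma inv_mx2p a b c d : a*d - b*c = 1 ->
  invmx (mx2 a b c d) = mx2 d (-b) (-c) a /\ GL2Z (mx2 a b c d).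
Proof.
move=> h; apply: inv_of; rewrite mul_mx2 one_mx2; apply: mx2_eq;
  first [rewrite -h; ring | ring].
Qed.

Lemma inv_mx2n a b c d : a*d - b*c = -1 ->
  invmx (mx2 a b c d) = mx2 (-d) b c (-a) /\ GL2Z (mx2 a b c d).
Proof.
move=> h; have h' : 1 = -(a*d - b*c) by rewrite h opprK.
apply: inv_of; rewrite mul_mx2 one_mx2; apply: mx2_eq;
  first [rewrite h'; ring | ring].
Qed.

Lemma commpp a b c d a' b' c' d' : a*d - b*c = 1 -> a'*d' - b'*c' = 1 ->
  comm2 (mx2 a b c d) (mx2 a' b' c' d') =
  mx2 a b c d *m mx2 a' b' c' d' *m mx2 d (-b) (-c) a *m mx2 d' (-b') (-c') a'.
Proof. by move=> h h'; rewrite /comm2 (proj1 (inv_mx2p h)) (proj1 (inv_mx2p h')). Qed.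
Lemma commpn a b c d a' b' c' d' : a*d - b*c = 1 -> a'*d' - b'*c' = -1 ->
  comm2 (mx2 a b c d) (mx2 a' b' c' d') =
  mx2 a b c d *m mx2 a' b' c' d' *m mx2 d (-b) (-c) a *m mx2 (-d') b' c' (-a').
Proof. by move=> h h'; rewrite /comm2 (proj1 (inv_mx2p h)) (proj1 (inv_mx2n h')). Qed.
Lemma commnn a b c d a' b' c' d' : a*d - b*c = -1 -> a'*d' - b'*c' = -1 ->
  comm2 (mx2 a b c d) (mx2 a' b' c' d') =
  mx2 a b c d *m mx2 a' b' c' d' *m mx2 (-d) b c (-a) *m mx2 (-d') b' c' (-a').
Proof. by move=> h h'; rewrite /comm2 (proj1 (inv_mx2n h)) (proj1 (inv_mx2n h')). Qed.

Lemma Tpow0 : Tpow 0 = mx2 1 0 0 1.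
Proof. by rewrite /Tpow /= one_mx2. Qed.
Lemma Tpow1 : Tpow 1 = mx2 1 1 0 1.
Proof. by []. Qed.

Lemma GLp a b c d : a*d - b*c = 1 -> GL2Z (mx2 a b c d).
Proof. by move=> h; case: (inv_mx2p h). Qed.
Lemma GLn a b c d : a*d - b*c = -1 -> GL2Z (mx2 a b c d).
Proof. by move=> h; case: (inv_mx2n h). Qed.

Lemma parity (n : int) : exists q r, n = q * 2 + r /\ (r = 0 \/ r = 1).
Proof.
exists (n %/ 2)%Z, (n %% 2)%Z; split; first exact: divz_eq.
have h0 := modz_ge0 n (isT : (2:int) != 0).
have h1 := ltz_pmod n (isT : (0:int) < 2).
lia.
Qed.

Ltac fin := rewrite ?mul_mx2; apply: mx2_eq; ring.

Theorem mainTheorem12 (n m : int) :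
  good_form (mx2 1 n 0 1) /\
  good_form (mx2 (-1) n 0 (-1)) /\
  good_form (mx2 n (1 - n * m) (-1) m) /\
  good_form (mx2 n (n * m - 1) 1 m).
Proof.
split; [|split; [|split]].
- have [q [r [-> [->| ->]]]] := parity n.
  + exists 0, (mx2 1 q 0 1), (mx2 1 0 0 (-1)), (mx2 1 0 0 1), (mx2 1 0 0 1).
    split; first by right; left.
    do 4 (split; [first [apply: GLp; ring | apply: GLn; ring] |]).
    rewrite Tpow0 commpn; [|ring|ring]; rewrite commpp; [|ring|ring]; fin.
  + exists 1, (mx2 1 q 0 1), (mx2 1 0 0 (-1)), (mx2 1 0 0 1), (mx2 1 0 0 1).
    split; first by right; right.
    do 4 (split; [first [apply: GLp; ring | apply: GLn; ring] |]).
    rewrite Tpow1 commpn; [|ring|ring]; rewrite commpp; [|ring|ring]; fin.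
- have [q [r [-> [->| ->]]]] := parity n.
  + exists 0, (mx2 1 (-q) 0 1), (mx2 1 0 0 (-1)), (mx2 0 1 (-1) 0), (mx2 1 0 0 (-1)).
    split; first by right; left.
    do 4 (split; [first [apply: GLp; ring | apply: GLn; ring] |]).
    rewrite Tpow0 commpn; [|ring|ring]; rewrite commpn; [|ring|ring]; fin.
  + exists 1, (mx2 1 (-(q+1)) 0 1), (mx2 1 0 0 (-1)), (mx2 0 1 (-1) 0), (mx2 1 0 0 (-1)).
    split; first by right; right.
    do 4 (split; [first [apply: GLp; ring | apply: GLn; ring] |]).
    rewrite Tpow1 commpn; [|ring|ring]; rewrite commpn; [|ring|ring]; fin.
- have [q [r [hs [hr| hr]]]] := parity (n + m);
  have -> : m = q * 2 + r - n by rewrite -hs; ring.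
  + subst r.
    pose j := - n.
    exists 1, (mx2 (j-1) (-(j*j)) 1 (-j-1)), (mx2 j (1-j*j) 1 (-j)),
      (mx2 1 (-q) 0 1), (mx2 1 0 0 (-1)).
    split; first by right; right.
    do 4 (split; [first [apply: GLp; rewrite /j; ring | apply: GLn; rewrite /j; ring] |]).
    rewrite Tpow1 commpn; [|rewrite /j; ring|rewrite /j; ring];
      rewrite commpn; [|ring|ring]; rewrite /j; fin.
  + subst r.
    pose j := 1 - n.
    exists 0, (mx2 (j-1) (-(j*j)) 1 (-j-1)), (mx2 j (1-j*j) 1 (-j)),
      (mx2 1 (-q) 0 1), (mx2 1 0 0 (-1)).
    split; first by right; left.
    do 4 (split; [first [apply: GLp; rewrite /j; ring | apply: GLn; rewrite /j; ring] |]).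
    rewrite Tpow0 commpn; [|rewrite /j; ring|rewrite /j; ring];
      rewrite commpn; [|ring|ring]; rewrite /j; fin.
- have [q [r [hs [hr| hr]]]] := parity (n + m);
  have -> : m = q * 2 + r - n by rewrite -hs; ring.
  + subst r.
    pose j := n.
    exists 1, (mx2 (j-1) (2*j - j*j) 1 (1-j)), (mx2 j (1-j*j) 1 (-j)),
      (mx2 1 q 0 1), (mx2 1 0 0 (-1)).
    split; first by right; right.
    do 4 (split; [first [apply: GLp; rewrite /j; ring | apply: GLn; rewrite /j; ring] |]).
    rewrite Tpow1 commnn; [|rewrite /j; ring|rewrite /j; ring];
      rewrite commpn; [|ring|ring]; rewrite /j; fin.
  + subst r.
    pose j := n + 1.
    exists 0, (mx2 (j-1) (2*j - j*j) 1 (1-j)), (mx2 j (1-j*j) 1 (-j)),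
      (mx2 1 (q+1) 0 1), (mx2 1 0 0 (-1)).
    split; first by right; left.
    do 4 (split; [first [apply: GLp; rewrite /j; ring | apply: GLn; rewrite /j; ring] |]).
    rewrite Tpow0 commnn; [|rewrite /j; ring|rewrite /j; ring];
      rewrite commpn; [|ring|ring]; rewrite /j; fin.
Qed.
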